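(* Let $G$ be a graph with no edge $e$ satisfying $|F_e|\ge 4$, no induced chordless cycle on 4 vertices, and no induced path on at least 7 vertices, and let $u,v,w$ be an induced path on three vertices in $G$, with $B_i$, $E_1$ and $j$ defined from $u,v,w$ as in the context. If $j\ge 2$, then the induced subgraph $G[B_2\cup\cdots\cup B_j]$ (meaning $G[\bigcup_{i\ge2}B_i]$ if $j=\infty$) is a collection of at most $|E_1|$ vertex-disjoint paths, i.e., each of its connected components is a path (possibly a single vertex) and it has at most $|E_1|$ connected components.
   Context: All graphs are finite, simple and undirected. For an edge $e$ of $G$, $F_e$ denotes the set of all edges $e'$ of $G$ such that $V(e)\cup V(e')$ induces a path on three vertices in $G$. Let $u,v,w$ be an induced path on three vertices ($uv,vw\in E(G)$, $uw\notin E(G)$), and $A=\{u,v,w\}$. $B$ is the set of vertices not in $A$ with exactly one or two neighbors in $A$; $C$ is the set of vertices adjacent to all three vertices of $A$; $D$ is the set of vertices not in $A\cup B\cup C$ with at least one neighbor in $C$. For $i\ge1$, $B_i$ is the set of vertices $x\notin A\cup B\cup C\cup D$ whose distance in $G$ to the set $B$ is exactly $i$; $B_0=B$, $B_{-1}=A$. For $i\ge0$, $E_i$ is the set of edges with one endpoint in $B_i$ and the other in $B_{i+1}$. $j$ is the minimum index $i\ge0$ such that there is an edge $e\in E_i$ with $|F_e|\ge3$, and $j=\infty$ if no such index exists. *)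

(* Defs.v *)
From mathcomp Require Import all_boot.
Set Implicit Arguments. Unset Strict Implicit. Unset Printing Implicit Defensive.

(* A finite simple graph: vertex type T : finType, adjacency e : rel T,
   assumed symmetric and irreflexive (hypotheses of the theorem). *)

Definition edges (T : finType) (e : rel T) : {set {set T}} :=
  [set S : {set T} | [exists x, exists y, e x y && (S == [set x; y])]].

Definition induces_P3 (T : finType) (e : rel T) (X : {set T}) : bool :=
  [exists a, exists b, exists c,
     [&& X == [set a; b; c], a != b, b != c, a != c,
         e a b, e b c & ~~ e a c]].

Definition Fe (T : finType) (e : rel T) (S : {set T}) : {set {set T}} :=
  [set S' in edges e | induces_P3 e (S :|: S')].

Definition is_induced_path (T : finType) (e : rel T) (p : seq T) : Prop :=
  uniq p /\ forall (x0 : T) (i j : nat), i < size p -> j < size p ->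
    e (nth x0 p i) (nth x0 p j) = (i == j.+1) || (j == i.+1).

Definition has_induced_C4 (T : finType) (e : rel T) : Prop :=
  exists a b c d : T,
    [/\ uniq [:: a; b; c; d],
        [&& e a b, e b c, e c d & e d a] & ~~ e a c && ~~ e b d].

Definition nbhd (T : finType) (e : rel T) (x : T) : {set T} := [set y | e x y].

Section Construction.
Variables (T : finType) (e : rel T) (u v w : T).

Definition Aset : {set T} := [set u; v; w].
Definition Bset : {set T} :=
  [set x | (x \notin Aset) && (0 < #|nbhd e x :&: Aset| <= 2)].
Definition Cset : {set T} :=
  [set x | (x \notin Aset) && (#|nbhd e x :&: Aset| == 3)].
Definition Dset : {set T} :=
  [set x | (x \notin Aset :|: Bset :|: Cset) && [exists y in Cset, e x y]].

Definition reach (k : nat) (x : T) (Y : {set T}) : bool :=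
  [exists p : k.-tuple T, path e x p && (last x p \in Y)].

Definition dist_is (x : T) (Y : {set T}) (i : nat) : bool :=
  reach i x Y && [forall k : 'I_i, ~~ reach k x Y].

Definition Bi (i : nat) : {set T} :=
  if i is i'.+1 then
    [set x | (x \notin Aset :|: Bset :|: Cset :|: Dset) && dist_is x Bset i]
  else Bset.

Definition Ei (i : nat) : {set {set T}} :=
  [set S in edges e | [exists x, exists y,
      [&& S == [set x; y], x \in Bi i & y \in Bi i.+1]]].

Definition big_index (i : nat) : bool := [exists S in Ei i, 3 <= #|Fe e S|].

(* jo is the index j: Some m = the least i with an edge e in E_i, |F_e|>=3;
   None = infinity (no such index). *)
Definition is_j (jo : option nat) : Prop :=
  match jo with
  | Some m => big_index m /\ forall k, k < m -> ~~ big_index k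
  | None => forall i, ~~ big_index i
  end.

End Construction.

Definition le_ext (i : nat) (jo : option nat) : bool :=
  if jo is Some m then i <= m else true.

Definition induced_rel (T : finType) (e : rel T) (W : {set T}) : rel T :=
  [rel x y | [&& e x y, x \in W & y \in W]].

Definition components (T : finType) (e : rel T) (W : {set T}) : {set {set T}} :=
  [set [set y in W | connect (induced_rel e W) x y] | x in W].

Definition ge_ext (jo : option nat) (i : nat) : bool :=
  if jo is Some m then i <= m else true.

(* Main.v *)
Require Import Defs.
From mathcomp Require Import all_boot zify.
Set Implicit Arguments. Unset Strict Implicit. Unset Printing Implicit Defensive.

Section Basic.
Variables (T : finType) (e : rel T).
Hypotheses (e_sym : symmetric e) (e_irr : irreflexive e).

Lemma neq_of_e x y : e x y -> x != y.
Proof. by apply: contraTneq => ->; rewrite e_irr. Qed.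

Lemma edges_mem a b : e a b -> [set a; b] \in edges e.
Proof. by move=> hab; rewrite inE; apply/existsP; exists a; apply/existsP; exists b; rewrite hab eqxx. Qed.

Lemma set2_mem_l (a b c d : T) : [set a; b] = [set c; d] -> (a == c) || (a == d).
Proof. move=> h; have : a \in [set a; b] by rewrite !inE eqxx.
by rewrite h !inE. Qed.

Lemma Fe_mem a b z : e a b -> e a z -> z != b -> ~~ e b z ->
  [set a; z] \in Fe e [set a; b].
Proof.
move=> hab haz hzb hbz; rewrite inE edges_mem //=.
apply/existsP; exists b; apply/existsP; exists a; apply/existsP; exists z.
rewrite (e_sym b a) hab haz hbz (eq_sym b a) (neq_of_e hab) (neq_of_e haz) (eq_sym b z) hzb !andbT.
apply/eqP/setP => t; rewrite !inE.
by case: (t == a); case: (t == b); case: (t == z).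
Qed.

Lemma Fe_mem2 a b z : e a b -> e b z -> z != a -> ~~ e a z ->
  [set b; z] \in Fe e [set a; b].
Proof.
move=> hab hbz hza haz.
have -> : [set a; b] = [set b; a] by apply/setP=> t; rewrite !inE orbC.
apply: Fe_mem => //; by rewrite e_sym.
Qed.

Lemma card_seq_le (S : {set T}) (s : seq T) : uniq s -> {subset s <= S} -> size s <= #|S|.
Proof.
move=> us sub; rewrite -(card_uniqP us); apply: subset_leq_card; exact/subsetP.
Qed.

End Basic.

Section Paths.
Variables (T : finType) (e : rel T).
Hypotheses (e_sym : symmetric e) (e_irr : irreflexive e).
Variables (W : {set T}) (lay : T -> nat -> bool).
Hypothesis hlay : forall x, x \in W -> exists i, lay x i.
Hypothesis hdeg : forall x, x \in W -> exists p,
  (forall i k, lay x i -> lay p k -> k < i) /\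
  (forall y1 y2, y1 \in W -> y2 \in W -> e x y1 -> e x y2 ->
      y1 != p -> y2 != p -> y1 = y2).

Lemma deg2 x y1 y2 y3 : x \in W -> y1 \in W -> y2 \in W -> y3 \in W ->
  e x y1 -> e x y2 -> e x y3 -> y1 != y2 -> y1 != y3 -> y2 != y3 -> False.
Proof.
move=> xW y1W y2W y3W e1 e2 e3 n12 n13 n23.
have [p [_ hp]] := hdeg xW.
have [/eqP E1|N1] := boolP (y1 == p).
  subst p; apply: (negP n23); apply/eqP; apply: hp; by rewrite // eq_sym.
have [/eqP E2|N2] := boolP (y2 == p).
  subst p; apply: (negP n13); apply/eqP; apply: hp; by rewrite // eq_sym.
apply: (negP n12); apply/eqP; exact: hp.
Qed.

Lemma nocycle (C : {set T}) : C \subset W ->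
  (forall y, y \in C -> exists y1 y2, [/\ y1 \in C, y2 \in C, y1 != y2, e y y1 & e y y2]) ->
  forall y, y \notin C.
Proof.
move=> /subsetP CW hC.
suff H : forall n y, lay y n -> y \in C -> False.
  move=> y; apply/negP => yC; have [n hn] := hlay (CW _ yC); exact: H hn yC.
elim/ltn_ind => n IH y hy yC.
have [p [hlt hp]] := hdeg (CW _ yC).
have [y1 [y2 [c1 c2 n12 e1 e2]]] := hC _ yC.
have pC : p \in C.
  have [/eqP<-|N1] := boolP (y1 == p) => //.
  have [/eqP<-|N2] := boolP (y2 == p) => //.
  by case: (negP n12); apply/eqP; apply: hp => //; apply: CW.
have [k hk] := hlay (CW _ pC).
exact: (IH k (hlt _ _ hy hk) p hk pC).
Qed.


Lemma path_comp x0 : x0 \in W -> exists s, is_induced_path e s /\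
   [set x in s] = [set y in W | connect (induced_rel e W) x0 y].
Proof.
move=> x0W.
set R := induced_rel e W.
set K := [set y in W | connect R x0 y].
have KW : forall y, y \in K -> y \in W by move=> y; rewrite inE => /andP[].
have Kcl : forall y z, y \in K -> z \in W -> e y z -> z \in K.
  move=> y z; rewrite !inE => /andP[yW cy] zW eyz; rewrite zW /=.
  apply: (connect_trans cy); apply: connect1; by rewrite /R /induced_rel /= eyz yW zW.
have x0K : x0 \in K by rewrite inE x0W connect0.
pose goodb (s : seq T) := [&& uniq s, all (fun y => y \in K) s,
   path e (head x0 s) (behead s) & s != [::]].
have [s gs smax] : exists2 s, goodb s & forall s', goodb s' -> size s' <= size s.
  pose P n := [exists t : n.-tuple T, goodb t].
  have exP : exists n, P n.
    exists 1; apply/existsP; exists [tuple x0]; by rewrite /goodb /= x0K.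
  have ubP : forall n, P n -> n <= #|T|.
    move=> n /existsP [t /and4P [ut _ _ _]].
    by rewrite -(size_tuple t) -(card_uniqP ut) max_card.
  case: (ex_maxnP exP ubP) => n /existsP [t gt] hmax.
  exists t => // s' gs'; rewrite size_tuple; apply: hmax.
  by apply/existsP; exists (in_tuple s').
case: s gs smax => [|a r]; first by case/and4P.
move=> /and4P [us sK pth _] smax.
move: us sK smax; move Es : (a :: r) => s us sK smax.
pose nb k := nth x0 s k.
have adj : forall i, i.+1 < size s -> e (nb i) (nb i.+1).
  by move=> i; rewrite /nb -Es => hi; exact: (pathP x0 pth).
have inK : forall i, i < size s -> nb i \in K by move=> i hi; apply: (all_nthP x0 sK).
have inW : forall i, i < size s -> nb i \in W by move=> i hi; apply: KW; apply: inK.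
have ninj : forall i j, i < size s -> j < size s -> (nb i == nb j) = (i == j).
  by move=> i j hi hj; apply: nth_uniq.
have deg2i : forall k a1 a2 a3, k < size s -> a1 < size s -> a2 < size s -> a3 < size s ->
   e (nb k) (nb a1) -> e (nb k) (nb a2) -> e (nb k) (nb a3) ->
   a1 != a2 -> a1 != a3 -> a2 != a3 -> False.
  move=> k a1 a2 a3 hk h1 h2 h3 e1 e2 e3 n12 n13 n23.
  by apply: (deg2 (inW _ hk) (inW _ h1) (inW _ h2) (inW _ h3) e1 e2 e3); rewrite ninj.
have adj' : forall i, 0 < i -> i < size s -> e (nb i) (nb i.-1).
  by move=> [|i] // _ hi; rewrite e_sym; apply: adj.
have cl : forall y, y \in W -> forall i, i < size s -> e (nb i) y -> y \in s.
  move=> y yW i hi ey; apply/negPn/negP => ys.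
  have yK := Kcl _ _ (inK _ hi) yW ey.
  have [/eqP Ei|Ni] := boolP (i == (size s).-1).
    suff: goodb (rcons s y) by move/smax; rewrite size_rcons ltnn.
    rewrite /goodb rcons_uniq ys us all_rcons yK sK -Es /= rcons_path pth /=.
    by move: ey; rewrite /nb Ei nth_last -Es /= andbT.
  have [/eqP Z|NZ] := boolP (i == 0).
    suff: goodb (y :: s) by move/smax; rewrite /= ltnn.
    rewrite /goodb cons_uniq ys us /= yK sK -Es /= pth andbT e_sym.
    by move: ey; rewrite /nb Z -Es andbT.
  have hi1 : i.+1 < size s by move: hi Ni; clear; lia.
  have i0 : 0 < i by move: NZ; clear; lia.
  have him : i.-1 < size s by move: hi; clear; lia.
  apply: (deg2 (inW _ hi) (inW _ him) (inW _ hi1) yW (adj' _ i0 hi) (adj _ hi1) ey).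
  - rewrite ninj; [by move: NZ; clear; lia| by move: hi; clear; lia | done].
  - by apply: contra ys => /eqP <-; rewrite /nb mem_nth.
  - by apply: contra ys => /eqP <-; rewrite /nb mem_nth.
have cl' : forall x y, x \in s -> y \in W -> e x y -> y \in s.
  move=> x y xs yW exy; apply: (cl y yW (index x s)); first by rewrite index_mem.
  by rewrite /nb nth_index.
have Rsym : symmetric R.
  by move=> x y; rewrite /R /induced_rel /= e_sym [(x \in W) && _]andbC.
have sclosed : closed R [set x in s].
  move=> x y; rewrite /R /induced_rel /= => /and3P [exy xW yW]; rewrite !inE.
  apply/idP/idP => h; first exact: cl' h yW exy.
  by apply: cl' h xW _; rewrite e_sym.
have as_ : a \in s by rewrite -Es mem_head.
have CW : [set x in s] \subset W.
  by apply/subsetP => x; rewrite inE => xs; apply: KW; apply: (allP sK).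
have key : forall i j, i < j -> j < size s -> e (nb i) (nb j) = (j == i.+1).
  move=> i j lt hj; have [/eqP E|nj] := boolP (j == i.+1); first by subst j; apply: adj.
  apply/negbTE/negP => eij.
  have [i0|] := boolP (0 < i).
    apply: (deg2i i i.-1 i.+1 j) => //; try (move: lt hj nj i0; clear; lia).
    - by apply: adj' => //; move: lt hj; clear; lia.
    - by apply: adj; move: lt hj nj; clear; lia.
  rewrite -eqn0Ngt => /eqP i0; subst i.
  have [jl|jnl] := boolP (j < (size s).-1).
    apply: (deg2i j j.-1 j.+1 0) => //; try (move: lt hj nj jl; clear; lia).
    - by apply: adj'.
    - by apply: adj; move: jl; clear; lia.
    - by rewrite e_sym.
  have Ej : j = (size s).-1 by move: hj jnl; clear; lia.
  suff /(nocycle CW)/(_ a) : forall y, y \in [set x in s] -> exists y1 y2,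
    [/\ y1 \in [set x in s], y2 \in [set x in s], y1 != y2, e y y1 & e y y2].
    by rewrite inE as_.
  move=> y; rewrite inE => ys.
  have hk : index y s < size s by rewrite index_mem.
  have yk : y = nb (index y s) by rewrite /nb nth_index.
  have inC : forall t, t < size s -> nb t \in [set x in s] by move=> t ht; rewrite inE mem_nth.
  set k := index y s in hk yk.
  have [/eqP k0|kn0] := boolP (k == 0).
    exists (nb 1), (nb j); split; try apply: inC; try (move: lt hj nj; clear; lia).
    - by rewrite ninj //; move: lt hj nj; clear; lia.
    - by rewrite yk k0; apply: adj; move: lt hj nj; clear; lia.
    - by rewrite yk k0.
  have [/eqP kj|knj] := boolP (k == j).
    exists (nb j.-1), (nb 0); split; try apply: inC; try (move: lt hj nj; clear; lia).
    - by rewrite ninj //; move: lt hj nj; clear; lia.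
    - by rewrite yk kj; apply: adj'; move: lt hj nj; clear; lia.
    - by rewrite yk kj e_sym.
  exists (nb k.-1), (nb k.+1); split; try apply: inC; try (move: hk kn0 knj Ej; clear; lia).
  - by rewrite ninj //; move: hk kn0 knj Ej; clear; lia.
  - by rewrite yk; apply: adj'; move: hk kn0 knj Ej; clear; lia.
  - by rewrite yk; apply: adj; move: hk kn0 knj Ej; clear; lia.
exists s; split.
  split => // x1 i j hi hj; rewrite !(set_nth_default x0 x1) // -/(nb i) -/(nb j).
  case: (ltngtP i j) => h.
  - by rewrite key //; move: h; clear; case: (i == j.+1) / eqP; lia.
  - by rewrite e_sym key //; move: h; clear; case: (j == i.+1) / eqP; lia.
  - by subst j; rewrite e_irr; case: (i == i.+1) / eqP; lia.
apply/setP => y; rewrite inE; apply/idP/idP; first exact: (allP sK).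
rewrite inE => /andP [yW cy].
have aK := allP sK a as_; move: aK; rewrite inE => /andP [_ ca].
have cay : connect R a y.
  by apply: connect_trans cy; rewrite (sym_connect_sym Rsym).
by have := closed_connect sclosed cay; rewrite !inE as_ => <-.
Qed.

End Paths.

Section Layers.
Variables (T : finType) (e : rel T).
Hypotheses (e_sym : symmetric e) (e_irr : irreflexive e).
Hypothesis noF4 : forall S, S \in edges e -> #|Fe e S| < 4.
Variables (u v w : T).

Local Notation A := (Aset u v w).
Local Notation B := (Bset e u v w).
Local Notation C := (Cset e u v w).
Local Notation D := (Dset e u v w).
Local Notation L := (Bi e u v w).

Lemma reach_step k x y (Y : {set T}) : e y x -> reach e k x Y -> reach e k.+1 y Y.
Proof.
move=> eyx /existsP [t /andP [pt lt]]; apply/existsP; exists [tuple of x :: t].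
by rewrite /= eyx pt.
Qed.

Lemma reach0 x (Y : {set T}) : reach e 0 x Y = (x \in Y).
Proof.
apply/existsP/idP => [[t]|xY]; first by rewrite (tuple0 t).
by exists [tuple]; rewrite /= xY.
Qed.

Lemma reach_pred k x (Y : {set T}) : reach e k.+1 x Y -> exists2 p, e x p & reach e k p Y.
Proof.
case/existsP => -[[|p t] //= ht] /andP [/andP [exp pt] lt].
exists p => //; apply/existsP; exists (Tuple (ht : size t == k)); by rewrite /= pt lt.
Qed.

Lemma dist_uniq x (Y : {set T}) i k : dist_is e x Y i -> dist_is e x Y k -> i = k.
Proof.
move=> /andP [ri fi] /andP [rk fk].
case: (ltngtP i k) => // h.
- by move/forallP: fk => /(_ (Ordinal h)); rewrite ri.
- by move/forallP: fi => /(_ (Ordinal h)); rewrite rk.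
Qed.

Lemma distB x i : x \in L i -> dist_is e x B i.
Proof.
case: i => [|i] /=.
  by move=> xB; rewrite /dist_is reach0 xB; apply/forallP => -[].
by rewrite inE => /andP [].
Qed.

Lemma layer_uniq x i k : x \in L i -> x \in L k -> i = k.
Proof. by move=> /distB h1 /distB h2; apply: dist_uniq h1 h2. Qed.

Lemma adj_layer x y i k : x \in L i -> y \in L k -> e x y -> k <= i.+1.
Proof.
move=> /distB /andP [rx _] /distB /andP [_ fy] exy.
have ry : reach e i.+1 y B by apply: reach_step rx; rewrite e_sym.
rewrite leqNgt; apply/negP => h.
by move/forallP: fy => /(_ (Ordinal h)); rewrite ry.
Qed.


Lemma card_le2 (S : {set T}) a b : S \subset [set a; b] -> #|S| <= 2.
Proof.
move=> h; apply: leq_trans (subset_leq_card h) _; rewrite cards2; by case: (a != b).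
Qed.

Lemma cardA : #|A| <= 3.
Proof.
apply: (leq_trans _ (card_size [:: u; v; w])); apply: subset_leq_card.
by apply/subsetP => t; rewrite /Aset !inE -orbA.
Qed.

Lemma notABC_adj x a : x \notin A -> x \notin B -> x \notin C -> a \in A -> ~~ e x a.
Proof.
move=> xA xB xC aA; apply/negP => exa.
have n0 : 0 < #|nbhd e x :&: A| by apply/card_gt0P; exists a; rewrite inE aA andbT /nbhd inE.
have n3 : #|nbhd e x :&: A| <= 3 by apply: leq_trans cardA; apply: subset_leq_card; apply: subsetIr.
case: (leqP #|nbhd e x :&: A| 2) => h.
  by move: xB; rewrite inE xA n0 h.
by move: xC; rewrite inE xA eqn_leq n3 h.
Qed.

Lemma Lnot i x : x \in L i.+1 -> [/\ x \notin A, x \notin B, x \notin C & x \notin D].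
Proof. rewrite /= inE !in_setU => /andP [h _]; move: h; rewrite !negb_or => /andP [/andP [/andP [h1 h2] h3] h4]; by split. Qed.

Lemma NC i x y : x \in L i.+1 -> e x y -> y \notin C.
Proof.
move=> xL exy; apply/negP => yC.
have [xA xB xC xD] := Lnot xL.
move: xD; rewrite in_set => /negP; apply; apply/andP; split.
  by rewrite 2!in_setU !negb_or xA xB xC.
by apply/existsP; exists y; rewrite yC exy.
Qed.

Lemma C_full c : c \in C -> [/\ e c u, e c v, e c w, c \notin A &
   [/\ u != v, u != w & v != w]].
Proof.
rewrite inE => /andP [cA /eqP h3].
have le : forall a b, nbhd e c :&: A \subset [set a; b] -> False.
  by move=> a b /card_le2; rewrite h3.
have eu : e c u.
  apply/negPn/negP => ncu; apply: (le v w).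
  apply/subsetP => t; rewrite inE /nbhd !inE => /andP [ect]; rewrite -!orbA => /or3P [/eqP E|/eqP E|/eqP E];
    subst t; rewrite ?eqxx ?orbT //; by rewrite ect in ncu.
have ev : e c v.
  apply/negPn/negP => ncu; apply: (le u w).
  apply/subsetP => t; rewrite inE /nbhd !inE => /andP [ect]; rewrite -!orbA => /or3P [/eqP E|/eqP E|/eqP E];
    subst t; rewrite ?eqxx ?orbT //; by rewrite ect in ncu.
have ew : e c w.
  apply/negPn/negP => ncu; apply: (le u v).
  apply/subsetP => t; rewrite inE /nbhd !inE => /andP [ect]; rewrite -!orbA => /or3P [/eqP E|/eqP E|/eqP E];
    subst t; rewrite ?eqxx ?orbT //; by rewrite ect in ncu.
have h3' : 3 <= #|A| by rewrite -h3; apply: subset_leq_card; apply: subsetIr.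
split => //; split.
- apply/negP => /eqP E; subst v; move: h3'; rewrite /Aset.
  have -> : [set u; u; w] = [set u; w] by apply/setP => t; rewrite !inE; case: (t == u); case: (t == w).
  by rewrite cards2; case: (_ != _).
- apply/negP => /eqP E; subst w; move: h3'; rewrite /Aset.
  have -> : [set u; v; u] = [set u; v] by apply/setP => t; rewrite !inE; case: (t == u); case: (t == v).
  by rewrite cards2; case: (_ != _).
- apply/negP => /eqP E; subst w; move: h3'; rewrite /Aset.
  have -> : [set u; v; v] = [set u; v] by apply/setP => t; rewrite !inE; case: (t == u); case: (t == v).
  by rewrite cards2; case: (_ != _).
Qed.


Lemma set2_neq (a b c d x : T) : x \in [set a; b] -> x != c -> x != d -> [set a; b] != [set c; d].
Proof. by move=> xa xc xd; apply/eqP => h; move: xa; rewrite h !inE (negbTE xc) (negbTE xd). Qed.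

Lemma ND i x y : x \in L i.+1 -> e x y -> y \notin D.
Proof.
move=> xL exy; apply/negP => yD.
have [xA xB xC xD] := Lnot xL.
move: (yD); rewrite in_set => /andP [yABC /existsP [c /andP [cC eyc]]].
move: yABC; rewrite 2!in_setU !negb_or => /andP [/andP [yA yB] yC].
have [ecu ecv ecw cA [nuv nuw nvw]] := C_full cC.
have ecy : e c y by rewrite e_sym.
have nyA : forall a, a \in A -> (a != y) && ~~ e y a.
  move=> a aA; rewrite (notABC_adj yA yB yC aA) andbT.
  by apply: contraNneq yA => <-.
have uA : u \in A by rewrite /Aset !inE eqxx.
have vA : v \in A by rewrite /Aset !inE eqxx orbT.
have wA : w \in A by rewrite /Aset !inE eqxx !orbT.
have [nuy nyu] := andP (nyA _ uA).
have [nvy nyv] := andP (nyA _ vA).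
have [nwy nyw] := andP (nyA _ wA).
have ncu : c != u by apply: contraNneq cA => ->.
have ncv : c != v by apply: contraNneq cA => ->.
have ncw : c != w by apply: contraNneq cA => ->.
have ncy : c != y by apply: contraNneq yC => <-.
have ncx : c != x by apply: contraNneq xC => <-.
have nexc : ~~ e c x.
  apply/negP => ecx; have exc : e x c by rewrite e_sym.
  by move: (NC xL exc); rewrite cC.
have nuc : u != c by rewrite eq_sym.
have nvc : v != c by rewrite eq_sym.
have := noF4 (edges_mem ecy).
suff : 4 <= #|Fe e [set c; y]| by move=> h1 h2; move: (leq_trans h1 h2); rewrite ltnn.
apply: (@card_seq_le _ _ [:: [set c; u]; [set c; v]; [set c; w]; [set y; x]]).
  rewrite /= !inE !negb_or !andbT.
  have cin : forall z, c \in [set c; z] by move=> z; rewrite !inE eqxx.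
  rewrite (set2_neq (x:=u) _ nuc nuv) ?inE ?eqxx ?orbT //.
  rewrite (set2_neq (x:=u) _ nuc nuw) ?inE ?eqxx ?orbT //.
  rewrite (set2_neq (x:=c) _ ncy ncx) ?inE ?eqxx ?orbT //.
  rewrite (set2_neq (x:=v) _ nvc nvw) ?inE ?eqxx ?orbT //.
  rewrite (set2_neq (x:=c) _ ncy ncx) ?inE ?eqxx ?orbT //.
  by rewrite (set2_neq (x:=c) _ ncy ncx) ?inE ?eqxx ?orbT.
move=> S; rewrite !in_cons in_nil orbF => /or4P [] /eqP ->.
- by apply: (Fe_mem e_sym e_irr) => //; rewrite eq_sym.
- by apply: (Fe_mem e_sym e_irr) => //; rewrite eq_sym.
- by apply: (Fe_mem e_sym e_irr) => //; rewrite eq_sym.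
- by apply: (Fe_mem2 e_sym e_irr) => //; [rewrite e_sym | rewrite eq_sym].
Qed.


Lemma parent i x : x \in L i.+1 -> exists2 p, e x p & p \in L i.
Proof.
move=> xL; have [xA xB xC xD] := Lnot xL.
have /andP [rx fx] := distB xL.
have [p exp rp] := reach_pred rx.
exists p => //.
have fp : forall k : 'I_i, ~~ reach e k p B.
  move=> k; apply/negP => rk.
  have rk' : reach e k.+1 x B by apply: reach_step rk.
  have k1 : k.+1 < i.+1 by rewrite ltnS.
  by move/forallP: fx => /(_ (Ordinal k1)); rewrite rk'.
case: i xL rx fx rp fp => [|i] xL rx fx rp fp; first by rewrite /= -reach0.
rewrite /= in_set.
apply/andP; split; last by rewrite /dist_is rp; apply/forallP.
rewrite 3!in_setU !negb_or (ND xL exp) (NC xL exp) !andbT.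
apply/andP; split.
  by apply/negP => pA; move: (notABC_adj xA xB xC pA); rewrite exp.
by apply/negP => pB; move: (fp ord0); rewrite reach0 pB.
Qed.

Lemma grand k a : a \in L k -> exists2 r, e a r & forall b, b \in L k.+1 -> (r != b) && ~~ e b r.
Proof.
case: k => [|k] aL.
  move: (aL); rewrite /= in_set => /andP [aA /andP [n0 _]].
  have /card_gt0P [r /setIP []] := n0.
  rewrite /nbhd in_set => ear rA; exists r => // b bL.
  have [bA bB bC bD] := Lnot bL.
  rewrite (notABC_adj bA bB bC rA) andbT.
  by apply: contraNneq bA => <-.
have [r ear rL] := parent aL.
exists r => // b bL; apply/andP; split.
  by apply/eqP => E; subst r; have := layer_uniq rL bL; lia.
apply/negP => ebr; have := adj_layer rL bL _; rewrite e_sym ebr => /(_ isT); lia.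
Qed.

Lemma Ei_mem k a b : a \in L k -> b \in L k.+1 -> e a b -> [set a; b] \in Ei e u v w k.
Proof.
move=> aL bL eab; rewrite in_set edges_mem //=.
by apply/existsP; exists a; apply/existsP; exists b; rewrite eqxx aL bL.
Qed.

Lemma KEY k a b y1 y2 : ~~ big_index e u v w k -> a \in L k -> b \in L k.+1 -> e a b ->
  e b y1 -> e b y2 -> y1 != a -> y2 != a -> ~~ e a y1 -> ~~ e a y2 -> y1 = y2.
Proof.
move=> nb aL bL eab eb1 eb2 n1 n2 ne1 ne2; apply/eqP/negPn/negP => n12.
have [r ear /(_ b bL) /andP [nrb nebr]] := grand aL.
move/existsP: nb; apply; exists [set a; b]; rewrite Ei_mem //=.
apply: (@card_seq_le _ _ [:: [set a; r]; [set b; y1]; [set b; y2]]).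
  rewrite /= !in_cons in_nil !orbF !negb_or andbT.
  have nab : a != b by apply: (neq_of_e e_irr).
  have nay1 : a != y1 by rewrite eq_sym.
  have nay2 : a != y2 by rewrite eq_sym.
  have ny1b : y1 != b by rewrite eq_sym; apply: (neq_of_e e_irr).
  rewrite (set2_neq (x:=a) _ nab nay1) ?inE ?eqxx //.
  rewrite (set2_neq (x:=a) _ nab nay2) ?inE ?eqxx //.
  by rewrite (set2_neq (x:=y1) _ ny1b n12) ?inE ?eqxx ?orbT.
move=> S; rewrite !in_cons in_nil orbF => /or3P [] /eqP ->.
- exact: (Fe_mem e_sym e_irr).
- exact: (Fe_mem2 e_sym e_irr).
- exact: (Fe_mem2 e_sym e_irr).
Qed.

End Layers.

Lemma le_ext_mono i k jo : i <= k -> le_ext k jo -> le_ext i jo.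
Proof. by case: jo => //= m ik km; apply: leq_trans ik km. Qed.

Unset Implicit Arguments.

Theorem corollary2 (T : finType) (e : rel T)
  (e_sym : symmetric e) (e_irr : irreflexive e)
  (noF4 : forall S, S \in edges e -> #|Fe e S| < 4)
  (noC4 : ~ has_induced_C4 e)
  (noP7 : ~ exists p : seq T, 7 <= size p /\ is_induced_path e p)
  (u v w : T) (huv : e u v) (hvw : e v w) (huw : ~~ e u w)
  (jo : option nat) (hj : is_j e u v w jo)
  (hj2 : ge_ext jo 2)
  (W : {set T})
  (hW : forall x, x \in W <->
          exists i, [/\ 2 <= i, le_ext i jo & x \in Bi e u v w i]) :
  (forall K, K \in components e W ->
     exists p : seq T, is_induced_path e p /\ [set x in p] = K)
  /\ #|components e W| <= #|Ei e u v w 1|.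
Proof.
pose L := Bi e u v w.
have hok : forall k, le_ext k.+1 jo -> ~~ big_index e u v w k.
  move=> k hk; destruct jo as [m|]; [case: hj => _ hm; exact: hm | exact: hj].
have Wlay : forall y k, y \in W -> y \in L k -> 2 <= k /\ le_ext k jo.
  move=> y k /hW [i [i2 ij yi]] yk; have E := layer_uniq yi yk; by subst k.
have inW : forall y k, 2 <= k -> le_ext k jo -> y \in L k -> y \in W.
  by move=> y k k2 kj yk; apply/hW; exists k.
pose lay := fun x i => x \in L i.
have hlay : forall x, x \in W -> exists i, lay x i.
  by move=> x /hW [i [_ _ xi]]; exists i.
have hdeg : forall x, x \in W -> exists p,
  (forall i k, lay x i -> lay p k -> k < i) /\
  (forall y1 y2, y1 \in W -> y2 \in W -> e x y1 -> e x y2 ->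
      y1 != p -> y2 != p -> y1 = y2).
  move=> x /hW [i [i2 ij xL]].
  case: i i2 ij xL => [|[|n]] // _ ij xL.
  have [p exp pL] := parent e_sym e_irr noF4 xL.
  have [q epq qL] := parent e_sym e_irr noF4 pL.
  have ok1 : ~~ big_index e u v w n.+1 by apply: hok.
  have ok0 : ~~ big_index e u v w n by apply: hok; apply: le_ext_mono ij.
  have eqp : e q p by rewrite e_sym.
  have epx : e p x by rewrite e_sym.
  have nxq : x != q by apply/eqP => E; subst q; move: (layer_uniq xL qL); clear; lia.
  have neqx : ~~ e q x by apply/negP => h; move: (adj_layer e_sym qL xL h); clear; lia.
  have Tl : forall y, y \in W -> e x y -> y != p -> e p y -> False.
    move=> y yW exy nyp epy.
    have [i' [i'2 i'j yL]] := (hW y).1 yW.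
    have h1 := adj_layer e_sym pL yL epy.
    have h2 : n.+2 <= i'.+1 by apply: (adj_layer e_sym yL xL); rewrite e_sym.
    have nyq : y != q by apply/eqP => E; subst q; move: (layer_uniq yL qL) h2; clear; lia.
    have [/eqP E|ni] := boolP (i' == n.+2).
      subst i'.
      have neqy : ~~ e q y by apply/negP => h; move: (adj_layer e_sym qL yL h); clear; lia.
      have := KEY e_sym e_irr noF4 ok0 qL pL eqp epx epy nxq nyq neqx neqy.
      by move=> E; subst y; rewrite e_irr in exy.
    have E : i' = n.+1 by move: h1 h2 ni; clear; lia.
    subst i'.
    have [eqy|neqy] := boolP (e q y); last first.
      have := KEY e_sym e_irr noF4 ok0 qL pL eqp epx epy nxq nyq neqx neqy.
      by move=> E; subst y; rewrite e_irr in exy.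
    have [n' En] : exists n', n = n'.+1 by move: i'2; case: (n) => // n' _; exists n'.
    subst n.
    have [r0 eqr rL] := parent e_sym e_irr noF4 qL.
    have ok2 : ~~ big_index e u v w n'.
      by apply: hok; apply: (le_ext_mono _ ij); clear; lia.
    have erq : e r0 q by rewrite e_sym.
    have npr : p != r0 by apply/eqP => E; subst r0; move: (layer_uniq pL rL); clear; lia.
    have nyr : y != r0 by apply/eqP => E; subst r0; move: (layer_uniq yL rL); clear; lia.
    have nerp : ~~ e r0 p by apply/negP => h; move: (adj_layer e_sym rL pL h); clear; lia.
    have nery : ~~ e r0 y by apply/negP => h; move: (adj_layer e_sym rL yL h); clear; lia.
    have := KEY e_sym e_irr noF4 ok2 rL qL erq eqp eqy npr nyr nerp nery.
    by move=> E; subst y; rewrite eqxx in nyp.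
  exists p; split.
    move=> i0 k0 xi0 pk0.
    have -> := layer_uniq xi0 xL; have -> := layer_uniq pk0 pL; done.
  move=> y1 y2 y1W y2W e1 e2 n1 n2.
  have ne1 : ~~ e p y1 by apply/negP; apply: Tl.
  have ne2 : ~~ e p y2 by apply/negP; apply: Tl.
  exact: (KEY e_sym e_irr noF4 ok1 pL xL epx e1 e2 n1 n2 ne1 ne2).
split.
  move=> K /imsetP [x xW ->].
  exact: (path_comp e_sym e_irr hlay hdeg xW).
set R := induced_rel e W.
set comps := components e W.
have Rsym : symmetric R.
  by move=> x y; rewrite /R /induced_rel /= e_sym [(x \in W) && _]andbC.
have comp_form : forall K, K \in comps -> exists2 x, x \in W & K = [set y in W | connect R x y].
  by move=> K /imsetP [x xW ->]; exists x.
have KW : forall K y, K \in comps -> y \in K -> y \in W.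
  by move=> K y /comp_form [x _ ->]; rewrite inE => /andP [].
have Kcl : forall K y z, K \in comps -> y \in K -> z \in W -> e y z -> z \in K.
  move=> K y z /comp_form [x _ ->]; rewrite !inE => /andP [yW cy] zW eyz; rewrite zW /=.
  apply: (connect_trans cy); apply: connect1; by rewrite /R /induced_rel /= eyz yW zW.
have comp_eq : forall K1 K2 b, K1 \in comps -> K2 \in comps -> b \in K1 -> b \in K2 -> K1 = K2.
  move=> K1 K2 b /comp_form [x1 _ ->] /comp_form [x2 _ ->]; rewrite !inE => /andP [_ c1] /andP [_ c2].
  have c12 : connect R x1 x2 by apply: connect_trans c1 _; rewrite (sym_connect_sym Rsym).
  have c21 : connect R x2 x1 by rewrite (sym_connect_sym Rsym).
  apply/setP => y; rewrite !inE; case: (y \in W) => //=.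
  by apply/idP/idP => h; [apply: connect_trans c21 h | apply: connect_trans c12 h].
have hasB2 : forall K, K \in comps -> exists2 z, z \in K & z \in L 2.
  move=> K KC.
  suff H : forall n y, y \in K -> y \in L n -> exists2 z, z \in K & z \in L 2.
    have [x xW EK] := comp_form K KC.
    have [i xi] := hlay x xW.
    by apply: (H i x) => //; rewrite EK inE xW connect0.
  elim/ltn_ind => n IH y yK yL.
  have [n2 nj] := Wlay y n (KW _ _ KC yK) yL.
  case: n IH n2 nj yL => [|[|[|m]]] // IH _ nj yL; first by exists y.
  have [p eyp pL] := parent e_sym e_irr noF4 yL.
  have pW : p \in W by apply: (inW p m.+2) => //; apply: (le_ext_mono _ nj).
  by apply: (IH m.+2 _ p _ pL) => //; apply: Kcl KC yK pW eyp.
pose f := fun K : {set T} => odflt set0 [pick S in Ei e u v w 1 | ~~ [disjoint S & K]].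
have fP : forall K, K \in comps -> f K \in Ei e u v w 1 /\ ~~ [disjoint f K & K].
  move=> K KC; rewrite /f; case: pickP => [S /andP [SE SK]|none] //=.
  exfalso; have [z zK zL] := hasB2 K KC.
  have [p ezp pL] := parent e_sym e_irr noF4 zL.
  have epz : e p z by rewrite e_sym.
  move: (none [set p; z]); rewrite (Ei_mem pL zL epz) /= => /negbFE dj.
  have zS : z \in [set p; z] by rewrite !inE eqxx orbT.
  by move: (disjointFr dj zS); rewrite zK.
have fmem : forall K a b, K \in comps -> f K = [set a; b] -> a \in L 1 -> b \in K.
  move=> K a b KC fE aL.
  have [_ SK] := fP K KC.
  have [t tS tK] : exists2 t, t \in f K & t \in K.
    by move: SK; rewrite -setI_eq0 => /set0Pn [t /setIP [tS tK]]; exists t.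
  move: tS; rewrite fE !inE => /orP [/eqP E|/eqP E]; subst t => //.
  by have [] := Wlay a 1 (KW _ _ KC tK) aL.
have finj : {in comps &, injective f}.
  move=> K1 K2 K1C K2C E.
  have [S1E _] := fP K1 K1C.
  move: S1E; rewrite in_set => /andP [_ /existsP [a /existsP [b /and3P [/eqP ES aL bL]]]].
  have b1 := fmem K1 a b K1C ES aL.
  have b2 : b \in K2 by apply: (fmem K2 a b K2C) => //; rewrite -E.
  exact: comp_eq K1C K2C b1 b2.
rewrite -(card_in_imset finj); apply: subset_leq_card.
by apply/subsetP => S /imsetP [K KC ->]; exact: (fP K KC).1.
Qed.
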